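(* Let $V:\mathbb{R}^d\to\mathbb{R}$ be smooth and growing to infinity fast enough that the diffusion $dX_t=-\nabla V(X_t)\,dt+\sigma\,dW_t$ (with constant $\sigma>0$ and $d$-dimensional Wiener process $W_t$) is ergodic and reversible with invariant density $\mu(x)\propto\exp(-\beta V(x))$, $\beta=2/\sigma^2$. Let $\mathcal{L}f=\frac{\sigma^2}{2}\Delta f-\nabla V\cdot\nabla f$ be its generator, self-adjoint on $L^2_\mu$, with eigenvalues $0=\lambda_0>\lambda_1\ge\dots\ge\lambda_m$ (the $m+1$ dominant ones) and corresponding $L^2_\mu$-orthonormal eigenfunctions $\varphi_0\equiv 1,\varphi_1,\dots,\varphi_m$. Suppose $\chi=(\chi_0,\dots,\chi_m)^\top$ consists of smooth functions with $\chi_i\ge 0$, $\sum_{i=0}^m\chi_i=1$, and $\mathrm{span}\{\chi_0,\dots,\chi_m\}=\mathrm{span}\{\varphi_0,\dots,\varphi_m\}$. Let $C\in\mathbb{R}^{(m+1)\times(m+1)}$ be the invertible matrix with $\chi(x)=C\varphi(x)$ for all $x$, where $\varphi=(\varphi_0,\dots,\varphi_m)^\top$, let $L=\mathrm{diag}(\lambda_0,\dots,\lambda_m)$, and set $\mathcal{Q}=CLC^{-1}$, so that $\mathcal{L}\chi=\mathcal{Q}\chi$ componentwise. Consider the effective dynamics induced by the collective variable $\chi$ on the latent space $\chi(\mathbb{R}^d)\subset\mathbb{R}^{m+1}$, i.e. $dz_t=\widetilde b(z_t)\,dt+\sigma A(z_t)\,dW_t$ with $\widetilde b_l(z)=\Pi_\chi(\mathcal{L}\chi_l)(z)$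 and $(AA^\top)_{lk}(z)=\Pi_\chi\big(\sum_{i,j=1}^d\partial_{x_i}\chi_l\,\partial_{x_j}\chi_k\big)(z)$, and with generator $\tilde{\mathcal{L}}f(z)=\widetilde b(z)\cdot\nabla_z f(z)+\frac12\mathrm{Tr}\big(\tilde\sigma\tilde\sigma^\top(z)\nabla_z^2f(z)\big)$, where $\tilde\sigma=\sigma A$. Then $\widetilde b(z)=\mathcal{Q}z$, i.e. the effective dynamics is $dz_t=\mathcal{Q}z_t\,dt+\tilde\sigma(z_t)\,dW_t$ with generator $\tilde{\mathcal{L}}f(z)=(\mathcal{Q}z)^\top\nabla_zf(z)+\frac12\mathrm{Tr}\big(\tilde\sigma\tilde\sigma^\top(z)\nabla_z^2f(z)\big)$. Moreover, for each $i=0,\dots,m$, letting $v_i^\top=e_i^\top C^{-1}$ (the left eigenvector of $\mathcal{Q}$ for $\lambda_i$, with $e_i$ the $i$-th unit vector), the linear function $\tilde\varphi_i(z)=v_i^\top z$ satisfies $\tilde{\mathcal{L}}\tilde\varphi_i=\lambda_i\tilde\varphi_i$; in particular $\tilde{\mathcal{L}}$ has the eigenvalues $\lambda_0,\dots,\lambda_m$.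
   Context: For a collective variable $\xi:\mathbb{R}^d\to\mathbb{R}^k$, the coordinate projection is $\Pi_\xi f(x)=\mathbb{E}_\mu\big(f(x')\mid\xi(x')=\xi(x)\big)$, the average of $f$ with respect to $\mu$ conditioned on the level set $\{x':\xi(x')=\xi(x)\}$; since it is constant on level sets it is regarded as a function of $z=\xi(x)$ on the latent space. $L^2_\mu$ is the space of square-integrable functions with inner product $\langle f,g\rangle_\mu=\int fg\,\mu\,dx$. *)

(* Defs.v *)
From HB Require Import structures.
From mathcomp Require Import all_boot all_order all_algebra.
From mathcomp Require Import all_classical all_reals all_analysis.

Set Implicit Arguments.
Unset Strict Implicit.
Unset Printing Implicit Defensive.

Import Order.TTheory GRing.Theory Num.Theory.
Import numFieldNormedType.Exports.

Local Open Scope classical_set_scope.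
Local Open Scope ring_scope.

Section mx_measurable.
Context (R : realType) (p q : nat).

Definition mx_coord_sets : set (set 'M[R]_(p, q)) :=
  <<s [set A : set 'M[R]_(p, q) | open A] >>.

Lemma mx_coord_sets0 : mx_coord_sets set0.
Proof. exact: sigma_algebra0. Qed.

Lemma mx_coord_setsC A : mx_coord_sets A -> mx_coord_sets (~` A).
Proof. exact: sigma_algebraC. Qed.

Lemma mx_coord_sets_bigcup (F : (set 'M[R]_(p, q))^nat) :
  (forall i, mx_coord_sets (F i)) -> mx_coord_sets (\bigcup_i F i).
Proof. exact: sigma_algebra_bigcup. Qed.

HB.instance Definition _ := @isMeasurable.Build default_measure_display
  'M[R]_(p, q) mx_coord_sets mx_coord_sets0 mx_coord_setsC
  mx_coord_sets_bigcup.

End mx_measurable.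

Section defs.
Context {R : realType}.

(* Lebesgue measure on R^d, characterized by its values on half-open boxes
   (this determines it uniquely on the Borel sets). *)
Definition is_lebesgue_Rd (d : nat) (leb : {measure set 'rV[R]_d -> \bar R}) :=
  forall a b : 'rV[R]_d, (forall i, a ord0 i <= b ord0 i) ->
    leb [set x | forall i, a ord0 i <= x ord0 i < b ord0 i]
    = (\prod_i (b ord0 i - a ord0 i))%:E.

Definition erow (d : nat) (i : 'I_d) : 'rV[R]_d := delta_mx 0 i.
Definition ecol (n : nat) (i : 'I_n) : 'cV[R]_n := delta_mx i 0.

Definition partial (d : nat) (i : 'I_d) (f : 'rV[R]_d -> R) : 'rV[R]_d -> R :=
  fun x => derive f x (erow i).
Definition cpartial (n : nat) (i : 'I_n) (f : 'cV[R]_n -> R) : 'cV[R]_n -> R :=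
  fun z => derive f z (ecol i).

Fixpoint iter_partial (d : nat) (s : seq 'I_d) (f : 'rV[R]_d -> R) :=
  match s with
  | [::] => f
  | i :: s' => partial i (iter_partial s' f)
  end.

Definition smooth (d : nat) (f : 'rV[R]_d -> R) :=
  forall s : seq 'I_d, continuous (iter_partial s f) /\
    forall (i : 'I_d) (x : 'rV[R]_d), derivable (iter_partial s f) x (erow i).

Definition gibbs (d : nat) (beta : R) (V : 'rV[R]_d -> R) (x : 'rV[R]_d) : R :=
  expR (- (beta * V x)).

Definition in_L2 (d : nat) (leb : {measure set 'rV[R]_d -> \bar R})
    (beta : R) (V : 'rV[R]_d -> R) (f : 'rV[R]_d -> R) :=
  measurable_fun setT f /\
  leb.-integrable setT (fun x => (f x ^+ 2 * gibbs beta V x)%:E).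

Definition L2dot (d : nat) (leb : {measure set 'rV[R]_d -> \bar R})
    (beta : R) (V : 'rV[R]_d -> R) (f g : 'rV[R]_d -> R) : R :=
  Rintegral leb setT (fun x => f x * g x * gibbs beta V x)
  / Rintegral leb setT (gibbs beta V).

Definition gen (d : nat) (sigma : R) (V f : 'rV[R]_d -> R) : 'rV[R]_d -> R :=
  fun x => sigma ^+ 2 / 2 * (\sum_i partial i (partial i f) x)
           - \sum_i partial i V x * partial i f x.

(* A regular conditional distribution of mu given the collective variable
   xi, whose fibre measures kappa (xi x) live on the level sets
   {x' | xi x' = xi x}.  The coordinate projection is then
   Pi_xi f (z) = int f d(kappa z). *)
Definition level_set_disintegration (d n : nat)
    (leb : {measure set 'rV[R]_d -> \bar R}) (beta : R) (V : 'rV[R]_d -> R)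
    (xi : 'rV[R]_d -> 'cV[R]_n)
    (kappa : R.-pker 'cV[R]_n ~> 'rV[R]_d) :=
  (forall x, kappa (xi x) [set y | xi y != xi x] = 0%E) /\
  (forall (A : set 'rV[R]_d) (B : set 'cV[R]_n), measurable A -> measurable B ->
     (\int[leb]_(x in A `&` xi @^-1` B) (gibbs beta V x)%:E
      = \int[leb]_(x in xi @^-1` B) (kappa (xi x) A * (gibbs beta V x)%:E))%E).

Definition coord_proj (d n : nat) (kappa : R.-pker 'cV[R]_n ~> 'rV[R]_d)
    (f : 'rV[R]_d -> R) (z : 'cV[R]_n) : R :=
  Rintegral (kappa z) setT f.

Definition chess (n : nat) (f : 'cV[R]_n -> R) (z : 'cV[R]_n) : 'M[R]_n :=
  \matrix_(l, k) cpartial l (cpartial k f) z.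

Definition gen_eff (n d : nat) (b : 'cV[R]_n -> 'cV[R]_n)
    (sigt : 'cV[R]_n -> 'M[R]_(n, d)) (f : 'cV[R]_n -> R) (z : 'cV[R]_n) : R :=
  \sum_l b z l 0 * cpartial l f z
  + 1 / 2 * \tr (sigt z *m (sigt z)^T *m chess f z).

End defs.

(* Main.v *)
Require Import Defs.
From HB Require Import structures.
From mathcomp Require Import all_boot all_order all_algebra.
From mathcomp Require Import all_classical all_reals all_analysis.
From mathcomp Require Import measurable_realfun.

Import Order.TTheory GRing.Theory Num.Theory.
Import numFieldNormedType.Exports.
Local Open Scope classical_set_scope.
Local Open Scope ring_scope.

Section helpers.
Context {R : realType}.

Lemma derive_affine (n : nat) (f : 'cV[R]_n -> R) z v c :
  (forall h : R, f (h *: v + z) = f z + h * c) -> derive f z v = c.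
Proof.
move=> hf; rewrite /derive; apply: norm_lim_near_cst.
near=> h.
have hne : h != 0 by near: h; exact: nbhs_dnbhs_neq.
rewrite /= hf addrC addKr /GRing.scale /= mulrA mulVf // mul1r.
Unshelve. all: by end_near.
Show.
Qed.

Lemma partial_sum {n d} {i : 'I_d} {c : 'I_n -> R} {f : 'I_n -> 'rV[R]_d -> R} :
  (forall j x, derivable (f j) x (erow i)) ->
  partial i (fun x => \sum_j c j * f j x) = fun x => \sum_j c j * partial i (f j) x.
Proof.
move=> hd; apply: funext => x; rewrite /partial.
have -> : (fun x => \sum_j c j * f j x) = \sum_j (c j \*: f j).
  by rewrite fct_sumE; apply: funext => y.
rewrite derive_sum => [|j]; last exact: derivableZ.
by apply: eq_bigr => j _; rewrite deriveZ.
Show.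
Qed.

Lemma gen_sum n d sigma (V : 'rV[R]_d -> R) (c : 'I_n -> R) (f : 'I_n -> 'rV[R]_d -> R) :
  (forall j, smooth (f j)) ->
  gen sigma V (fun x => \sum_j c j * f j x) = fun x => \sum_j c j * gen sigma V (f j) x.
Proof.
move=> hs.
have d0 i j x : derivable (f j) x (erow i) by exact: ((hs j [::]).2 i x).
have d1 i j x : derivable (partial i (f j)) x (erow i) by exact: ((hs j [:: i]).2 i x).
apply: funext => x; rewrite /gen.
under eq_bigr => k _ do rewrite (partial_sum (d0 k)) (partial_sum (d1 k)).
under [X in _ - X]eq_bigr => k _ do rewrite (partial_sum (d0 k)).
rewrite exchange_big.
under [X in _ - X]eq_bigr => k _ do rewrite mulr_sumr.
rewrite [X in _ - X]exchange_big /= mulr_sumr -sumrB.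
apply: eq_bigr => j _; rewrite mulrBr !mulr_sumr.
by congr (_ - _); apply: eq_bigr => k _; rewrite mulrCA.
Show.
Qed.


End helpers.

Theorem mainTheorem1 (R : realType) (d m : nat) (sigma : R)
  (V : 'rV[R]_d -> R) (leb : {measure set 'rV[R]_d -> \bar R})
  (lam : 'I_m.+1 -> R) (phi chi : 'I_m.+1 -> 'rV[R]_d -> R)
  (C : 'M[R]_m.+1)
  (kappa : R.-pker 'cV[R]_m.+1 ~> 'rV[R]_d)
  (A : 'cV[R]_m.+1 -> 'M[R]_(m.+1, d)) :
  0 < sigma ->
  is_lebesgue_Rd leb ->
  smooth V ->
  leb.-integrable setT (fun x => (gibbs (2 / sigma ^+ 2) V x)%:E) ->
  (* spectrum: 0 = lam_0 > lam_1 >= ... >= lam_m *)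
  lam ord0 = 0 ->
  (forall i : 'I_m.+1, (0 < i)%N -> lam i < 0) ->
  (forall i j : 'I_m.+1, (i <= j)%N -> lam j <= lam i) ->
  (* eigenfunctions phi_0 = 1, phi_1, ..., phi_m, orthonormal in L^2_mu *)
  (forall i, smooth (phi i)) ->
  (forall i, in_L2 leb (2 / sigma ^+ 2) V (phi i)) ->
  phi ord0 = (fun=> 1) ->
  (forall i, gen sigma V (phi i) = (fun x => lam i * phi i x)) ->
  (forall i j, L2dot leb (2 / sigma ^+ 2) V (phi i) (phi j) = (i == j)%:R) ->
  (* they are the m+1 dominant ones *)
  (forall (f : 'rV[R]_d -> R) (l : R), smooth f ->
     in_L2 leb (2 / sigma ^+ 2) V f ->
     L2dot leb (2 / sigma ^+ 2) V f f != 0 ->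
     gen sigma V f = (fun x => l * f x) ->
     (forall i, L2dot leb (2 / sigma ^+ 2) V f (phi i) = 0) ->
     l <= lam ord_max) ->
  (* the collective variable chi *)
  (forall i, smooth (chi i)) ->
  (forall i x, 0 <= chi i x) ->
  (forall x, \sum_i chi i x = 1) ->
  (forall i, exists c : 'I_m.+1 -> R, chi i = (fun x => \sum_j c j * phi j x)) ->
  (forall i, exists c : 'I_m.+1 -> R, phi i = (fun x => \sum_j c j * chi j x)) ->
  C \in unitmx ->
  (forall i x, chi i x = \sum_j C i j * phi j x) ->
  (* coordinate projection Pi_chi, realized by a disintegration of mu
     along the level sets of chi *)
  level_set_disintegration leb (2 / sigma ^+ 2) V
    (fun x => \col_i chi i x) kappa ->
  (* diffusion coefficient A A^T = Pi_chi(sum_{i,j} d_i chi_l d_j chi_k) *)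
  (forall x, let z := \col_i chi i x in
     A z *m (A z)^T
     = \matrix_(l, k) coord_proj kappa
         (fun y => \sum_i \sum_j partial i (chi l) y * partial j (chi k) y) z) ->
  let Q := C *m diag_mx (\row_i lam i) *m invmx C in
  let bt := fun z : 'cV[R]_m.+1 =>
    \col_l coord_proj kappa (gen sigma V (chi l)) z in
  let sigt := fun z : 'cV[R]_m.+1 => sigma *: A z in
  (forall x, let z := \col_i chi i x in bt z = Q *m z) /\
  (forall i : 'I_m.+1,
     let phit := fun z : 'cV[R]_m.+1 => (row i (invmx C) *m z) 0 0 in
     (forall x, let z := \col_i chi i x in
        gen_eff bt sigt phit z = lam i * phit z) /\
     (exists x, phit (\col_i chi i x) != 0)).
Proof.
move=> sig_gt0 hleb hV hint hlam0 hlamneg hlammon hphis hphiL2 hphi0 hgen horth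
  hdom hchis hchi0 hchi1 hspan1 hspan2 hCu hchi hdis hA Q bt sigt.
have chiC y : \col_i chi i y = C *m \col_j phi j y.
  by apply/matrixP => i k; rewrite ord1 !mxE hchi; apply: eq_bigr => j _; rewrite mxE.
have genchi' l : gen sigma V (chi l) = fun y => \sum_j C l j * (lam j * phi j y).
  have -> : chi l = (fun x => \sum_j C l j * phi j x) by apply: funext => x; rewrite hchi.
  by rewrite gen_sum //; apply: funext => y; apply: eq_bigr => j _; rewrite hgen.
have genchi l : gen sigma V (chi l) = fun y => (Q *m \col_i chi i y) l 0.
  rewrite genchi'; apply: funext => y.
  rewrite chiC /Q -!mulmxA (mulmxA (invmx C)) mulVmx // mul1mx mulmxA mul_mx_diag !mxE.
  by apply: eq_bigr => j _; rewrite !mxE mulrA.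
have mphi j : measurable_fun setT (phi j) by case: (hphiL2 j).
have mgen l : measurable_fun setT (gen sigma V (chi l)).
  rewrite genchi'; apply: measurable_sum => j.
  exact: (measurable_funM (measurable_cst (C l j))
            (measurable_funM (measurable_cst (lam j)) (mphi j))).
have mN x : measurable [set y | \col_i chi i y != \col_i chi i x].
  have -> : [set y | \col_i chi i y != \col_i chi i x] =
      \bigcup_(i in setT) (chi i @^-1` [set r | r != chi i x]).
    apply/seteqP; split => y /=.
    - move=> hne; case: (pselect (exists i, chi i y != chi i x)) => [[i hi]|hno].
        by exists i.
      exfalso; move/negP: hne; apply; apply/eqP/matrixP => i k; rewrite ord1 !mxE.
      by apply/eqP; apply/negPn/negP => h; apply: hno; exists i.
    - move=> [i _ hi]; apply/negP => /eqP /matrixP /(_ i 0); rewrite !mxE => e.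
      by rewrite /= e eqxx in hi.
  apply: sub_sigma_algebra; apply: bigcup_open => i _.
  apply: open_comp; last exact: open_neq.
  by move=> y _; exact: ((hchis i [::]).1 y).
have pc x (f : 'rV[R]_d -> R) c : measurable_fun setT f ->
    (forall y, \col_i chi i y = \col_i chi i x -> f y = c) ->
    coord_proj kappa f (\col_i chi i x) = c.
  move=> mf hf; rewrite /coord_proj /Rintegral.
  rewrite (ae_eq_integral (fun=> c%:E)) //.
  - rewrite -/(Rintegral _ _ (fun=> c)) Rintegral_cst // prob_kernel /= mulr1 //.
  - by apply/measurable_EFinP.
  - exists [set y | \col_i chi i y != \col_i chi i x]; split.
    + exact: mN.
    + exact: (hdis.1 x).
    + move=> y /= hy; apply/eqP => e; apply: hy => _.
      by rewrite (hf y e).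
have P1 x : bt (\col_i chi i x) = Q *m \col_i chi i x.
  apply/matrixP => l k; rewrite ord1 /bt mxE; apply: pc; first exact: mgen.
  by move=> y hy; rewrite genchi hy.
split; first by move=> x; exact: P1.
move=> i phit; split.
- move=> x z.
  have dp l z' : cpartial l phit z' = invmx C i l.
    rewrite /cpartial; apply: derive_affine => h.
    rewrite /phit mulmxDr -scalemxAr [in LHS]mxE addrC; congr (_ + _).
    by rewrite mxE /ecol -colE !mxE.
  have hess : chess phit z = 0.
    apply/matrixP => l k; rewrite !mxE.
    have -> : cpartial k phit = cst (invmx C i k) by apply: funext => z'; exact: dp.
    by rewrite /cpartial derive_cst.
  rewrite /gen_eff hess mulmx0 mxtrace0 mulr0 addr0.
  under eq_bigr do rewrite dp.
  rewrite /z P1.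
  have -> : \sum_l (Q *m \col_i0 chi i0 x) l 0 * invmx C i l =
      (row i (invmx C) *m (Q *m \col_i0 chi i0 x)) 0 0.
    by rewrite [RHS]mxE; apply: eq_bigr => l _; rewrite mulrC [in RHS]mxE.
  rewrite /phit /Q !mulmxA -row_mul mulVmx // -row_mul mul1mx row_diag_mx.
  by rewrite -scalemxAl -rowE -scalemxAl mxE mxE.
- have hphi x : phit (\col_i chi i x) = phi i x.
    by rewrite /phit chiC mulmxA -row_mul mulVmx // row1 -rowE !mxE.
  case: (pselect (exists x, phi i x != 0)) => [[x hx]|hno].
    by exists x; rewrite hphi.
  exfalso.
  have h0 : phi i = fun=> 0.
    by apply: funext => x; apply/eqP; apply/negPn/negP => hx; apply: hno; exists x.
  have := horth i i; rewrite eqxx /L2dot h0.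
  under eq_Rintegral do rewrite !mul0r.
  rewrite Rintegral_cst // !mul0r => /eqP; by rewrite eq_sym oner_eq0.
Qed.
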